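(* Let $n\ge 2$ be an integer and $t>1$ a real number, and let $O^t_n$ be the set of $n$ line segments in the plane defined below. Then every imprecise $t$-spanner for $O^t_n$ is the complete graph: for any two distinct segments of $O^t_n$ there is an edge between them. In particular, every imprecise $t$-spanner for $O^t_n$ has $\binom{n}{2}=\Omega(n^2)$ edges.
   Context: Construction of $O^t_n$: let $\theta=2\pi/n$ and for $0\le i<n$ let $\ell_i$ be the ray from the origin obtained by rotating the positive $x$-axis by angle $i\theta$. Let $D_1,D_2$ be the disks centered at the origin with radii $0.4$ and $(t+1)/2$. Let $p_i$ and $q_i$ be the intersection points of $\ell_i$ with the boundaries of $D_1$ and $D_2$ respectively. Then $O^t_n=\{\overline{p_iq_i} : 0\le i<n\}$, a set of pairwise disjoint segments. An imprecise point set is a set $R=\{R_1,\dots,R_n\}$ of regions in $\mathbb{R}^d$; a precise instance of $R$ is a set $S=\{x_1,\dots,x_n\}$ with $x_i\in R_i$ for all $i$. An imprecise graph $G=(R,E)$ has as edges unordered pairs of regions; for a precise instance $S$, $G_S=(S,E_S)$ with $E_S=\{\{x_i,x_j\}:\{R_i,R_j\}\in E\}$, edges weighted by Euclidean length. A geometric graph $H$ on a point set is a $t$-spanner if for all distinct vertices $u,v$ the shortest-path distance $d_H(u,v)$ satisfies $d_H(u,v)\le t\,|uv|$. $G$ is an imprecise $t$-spanner for $R$ if $G_S$ is a $t$-spanner for every precise instance $S$ of $R$. *)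

(* Defs.v *)
From Stdlib Require Import Reals Lra List.
Open Scope R_scope.

Definition point : Type := (R * R)%type.

Definition dist (p q : point) : R :=
  sqrt ((fst p - fst q) ^ 2 + (snd p - snd q) ^ 2).

(* The set O^t_n : region i (0 <= i < n) is the segment p_i q_i on the ray
   l_i of angle i*theta, theta = 2 pi / n, between radius 0.4 and (t+1)/2. *)
Definition theta (n : nat) : R := 2 * PI / INR n.

Definition ray_point (n i : nat) (r : R) : point :=
  (r * cos (INR i * theta n), r * sin (INR i * theta n)).

Definition p_pt (n i : nat) : point := ray_point n i (4 / 10).
Definition q_pt (t : R) (n i : nat) : point := ray_point n i ((t + 1) / 2).

Definition in_O (t : R) (n i : nat) (x : point) : Prop :=
  exists lam : R, 0 <= lam <= 1 /\
    x = (lam * fst (p_pt n i) + (1 - lam) * fst (q_pt t n i),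
         lam * snd (p_pt n i) + (1 - lam) * snd (q_pt t n i)).

(* An imprecise graph on regions indexed by 0..n-1: E is an edge relation on
   indices; the unordered edge {i,j} is present iff E i j or E j i. *)
Definition adj (E : nat -> nat -> Prop) (a b : nat) : Prop := E a b \/ E b a.

(* A walk a = k_0, k_1, ..., k_m = b in the graph, with the list giving the
   intermediate vertices; all intermediate vertices are regions (< n). *)
Fixpoint walk (n : nat) (E : nat -> nat -> Prop) (a : nat) (l : list nat) (b : nat)
  : Prop :=
  match l with
  | nil => adj E a b
  | c :: l' => (c < n)%nat /\ adj E a c /\ walk n E c l' b
  end.

Fixpoint walk_len (x : nat -> point) (a : nat) (l : list nat) (b : nat) : R :=
  match l with
  | nil => dist (x a) (x b)
  | c :: l' => dist (x a) (x c) + walk_len x c l' b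
  end.

(* d_{G_S}(x_i, x_j) <= t |x_i x_j| : the shortest-path distance is the
   minimum of the lengths of walks, so this says some walk is short enough. *)
Definition spanner_pair (t : R) (n : nat) (E : nat -> nat -> Prop)
  (x : nat -> point) (i j : nat) : Prop :=
  exists l : list nat, walk n E i l j /\ walk_len x i l j <= t * dist (x i) (x j).

Definition is_t_spanner (t : R) (n : nat) (E : nat -> nat -> Prop)
  (x : nat -> point) : Prop :=
  forall i j : nat, (i < n)%nat -> (j < n)%nat -> i <> j -> spanner_pair t n E x i j.

Definition precise_instance (t : R) (n : nat) (x : nat -> point) : Prop :=
  forall i : nat, (i < n)%nat -> in_O t n i (x i).

Definition imprecise_t_spanner (t : R) (n : nat) (E : nat -> nat -> Prop) : Prop :=
  forall x : nat -> point, precise_instance t n x -> is_t_spanner t n E x.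

(* Main.v *)
Require Import Defs.
From Stdlib Require Import Reals.
From Stdlib Require Import Lra List Arith.
From Stdlib Require Rgeom.
Open Scope R_scope.

Lemma dist_eq (p q : point) : Defs.dist p q = Rgeom.dist_euc (fst p) (snd p) (fst q) (snd q).
Proof. unfold Defs.dist, Rgeom.dist_euc, Rsqr. f_equal. ring. Qed.

Lemma dist_tri (a b c : point) : Defs.dist a b <= Defs.dist a c + Defs.dist c b.
Proof. rewrite !dist_eq. apply Rgeom.triangle. Qed.

Lemma dist_sym (a b : point) : Defs.dist a b = Defs.dist b a.
Proof. rewrite !dist_eq. apply Rgeom.distance_symm. Qed.

Lemma dist_pos (a b : point) : 0 <= Defs.dist a b.
Proof. unfold dist. apply sqrt_pos. Qed.

Lemma dist_origin (n k : nat) (s : R) : 0 <= s ->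
  Defs.dist (0,0) (ray_point n k s) = s.
Proof.
  intros Hs. unfold Defs.dist, ray_point; simpl.
  replace ((0 - s * cos (INR k * theta n)) * ((0 - s * cos (INR k * theta n)) * 1) +
           (0 - s * sin (INR k * theta n)) * ((0 - s * sin (INR k * theta n)) * 1))
    with (s * s * (Rsqr (sin (INR k * theta n)) + Rsqr (cos (INR k * theta n))))
    by (unfold Rsqr; ring).
  rewrite sin2_cos2, Rmult_1_r. apply sqrt_square. exact Hs.
Qed.

Lemma walk_len_ge (x : nat -> point) (l : list nat) : forall a b,
  Defs.dist (x a) (x b) <= walk_len x a l b.
Proof.
  induction l as [|c l IH]; intros a b; simpl.
  - lra.
  - specialize (IH c b). pose proof (dist_tri (x a) (x b) (x c)). lra.
Qed.

Lemma walk_len_mid (x : nat -> point) (l : list nat) : forall a b c, In c l ->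
  Defs.dist (x a) (x c) + Defs.dist (x c) (x b) <= walk_len x a l b.
Proof.
  induction l as [|c' l IH]; intros a b c Hin; simpl in *.
  - contradiction.
  - destruct Hin as [<- | Hin].
    + pose proof (walk_len_ge x l c' b). lra.
    + specialize (IH c' b c Hin). pose proof (dist_tri (x a) (x c) (x c')). lra.
Qed.

Lemma walk_split n E i j (l : list nat) : forall a, a = i ->
  walk n E a l j -> adj E i j \/ exists c, In c l /\ c <> i /\ c <> j.
Proof.
  induction l as [|c l IH]; intros a Ha Hw; simpl in *.
  - subst; left; exact Hw.
  - destruct Hw as [_ [Hac Hw]]. subst a.
    destruct (Nat.eq_dec c j) as [->|Hcj]; [left; exact Hac|].
    destruct (Nat.eq_dec c i) as [->|Hci].
    + destruct (IH i eq_refl Hw) as [H|[d [Hd1 Hd2]]]; [left; exact H|].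
      right. exists d. auto.
    + right. exists c. auto.
Qed.

Theorem lemma1 (n : nat) (t : R) (E : nat -> nat -> Prop) :
  (2 <= n)%nat -> 1 < t ->
  imprecise_t_spanner t n E ->
  forall i j : nat, (i < n)%nat -> (j < n)%nat -> i <> j -> adj E i j.
Proof.
  intros Hn Ht Hsp i j Hi Hj Hij.
  set (x := fun k : nat => if (Nat.eqb k i || Nat.eqb k j)%bool then p_pt n k else q_pt t n k).
  assert (Hx : precise_instance t n x).
  { intros k _. unfold x, in_O.
    destruct (Nat.eqb k i || Nat.eqb k j)%bool.
    - exists 1. split; [lra|]. destruct (p_pt n k) as [u v]; simpl. f_equal; ring.
    - exists 0. split; [lra|]. destruct (q_pt t n k) as [u v]; simpl. f_equal; ring. }
  destruct (Hsp x Hx i j Hi Hj Hij) as [l [Hw Hlen]].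
  destruct (walk_split n E i j l i eq_refl Hw) as [H|[c [Hc [Hci Hcj]]]]; [exact H|].
  exfalso.
  pose proof (walk_len_mid x l i j c Hc) as Hm.
  assert (Exi : x i = p_pt n i) by (unfold x; rewrite Nat.eqb_refl; reflexivity).
  assert (Exj : x j = p_pt n j) by (unfold x; rewrite Nat.eqb_refl, Bool.orb_true_r; reflexivity).
  assert (Exc : x c = q_pt t n c).
  { unfold x. apply Nat.eqb_neq in Hci. apply Nat.eqb_neq in Hcj. rewrite Hci, Hcj. reflexivity. }
  rewrite Exi, Exj, Exc in *.
  assert (Hp : forall k, Defs.dist (0,0) (p_pt n k) = 4/10).
  { intro k. apply dist_origin. lra. }
  assert (Hq : Defs.dist (0,0) (q_pt t n c) = (t+1)/2).
  { apply dist_origin. lra. }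
  assert (H1 : Defs.dist (p_pt n i) (p_pt n j) <= 8/10).
  { pose proof (dist_tri (p_pt n i) (p_pt n j) (0,0)).
    rewrite (dist_sym (p_pt n i) (0,0)) in H. rewrite Hp, Hp in H. lra. }
  assert (H2 : Defs.dist (p_pt n i) (q_pt t n c) >= (t+1)/2 - 4/10).
  { pose proof (dist_tri (0,0) (q_pt t n c) (p_pt n i)). rewrite Hp, Hq in H. lra. }
  assert (H3 : Defs.dist (q_pt t n c) (p_pt n j) >= (t+1)/2 - 4/10).
  { pose proof (dist_tri (0,0) (q_pt t n c) (p_pt n j)). rewrite Hp, Hq in H.
    rewrite dist_sym. lra. }
  assert (H4 : t * Defs.dist (p_pt n i) (p_pt n j) <= t * (8/10)).
  { apply Rmult_le_compat_l; lra. }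
  lra.
Qed.
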